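(* Let $S$ be a set of primes, and for $z>e$ let $S_z=\{p\in S: p\le z\}$. Let $\beta$ and $C$ be real constants and suppose $z>e$ satisfies $\sum_{p\in S_z}1/p\leq \beta\log\log z + C$. Let $N_z$ be the set of all positive integers all of whose prime factors lie in $S_z$. Let $\eta\ge 1$. Then \[ \sum_{\substack{n\in N_z\\ \omega(n)\ge \eta\beta\log\log z}}\frac{1}{n} \ll_{C,\eta} (\log z)^{\beta(\eta-\eta\log\eta)}, \] where the implied constant depends only on $C$ and $\eta$.
   Context: $\omega(n)$ is the number of distinct prime divisors of $n$. *)

(* Defs.v *)
From HB Require Import structures.
From mathcomp Require Import all_boot all_order all_algebra.
From mathcomp Require Import all_classical all_reals all_analysis.
Set Implicit Arguments. Unset Strict Implicit. Unset Printing Implicit Defensive.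
Import Order.TTheory GRing.Theory Num.Theory.
Local Open Scope classical_set_scope.
Local Open Scope ring_scope.

Definition omega (n : nat) : nat := size (primes n).

Definition S_le {R : realType} (S : set nat) (z : R) : set nat :=
  [set p | S p /\ (p%:R <= z)].

Definition N_le {R : realType} (S : set nat) (z : R) : set nat :=
  [set n | (0 < n)%N /\ (forall p : nat, prime p -> (p %| n)%N -> S_le S z p)].

(* Main.v *)
Require Import Defs.
From HB Require Import structures.
From mathcomp Require Import all_boot all_order all_algebra.
From mathcomp Require Import all_classical all_reals all_analysis.
From mathcomp Require Import ring lra.
Import Order.TTheory GRing.Theory Num.Theory.
Local Open Scope classical_set_scope.
Local Open Scope ring_scope.
Lemma geo_aux (R : realType) (x : R) M :
  (1 - x) * \sum_(j < M) x ^+ j.+1 = x - x ^+ M.+1.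
Proof.
elim: M => [|M IH]; first by rewrite big_ord0 mulr0 expr1 subrr.
rewrite big_ord_recr /= mulrDr IH [x ^+ M.+2]exprS; ring.
Qed.

Lemma geo_le (R : realType) (p : nat) (t : R) M : (2 <= p)%N -> 0 <= t ->
  \sum_(j < M.+1) (if j == 0%N :> nat then 1 else t / (p%:R ^+ j)) <= 1 + t / (p%:R - 1).
Proof.
move=> hp ht.
rewrite big_ord_recl /= lerD2l.
have hp1 : (1 : R) < p%:R by rewrite ltr1n.
have hp0 : (0 : R) < p%:R by lra.
set x := (p%:R : R)^-1.
have hx0 : 0 <= x by rewrite invr_ge0 ltW.
have hx1 : x < 1 by rewrite invf_lt1.
have -> : \sum_(i < M) (t / p%:R ^+ (bump 0 i)) = t * \sum_(j < M) x ^+ j.+1.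
  rewrite mulr_sumr; apply: eq_bigr => i _.
  by rewrite /x exprVn.
have e : \sum_(j < M) x ^+ j.+1 = (x - x ^+ M.+1) / (1 - x).
  rewrite -geo_aux; field; lra.
rewrite e ler_wpM2l //.
have -> : (p%:R - 1)^-1 = x / (1 - x).
  rewrite /x; field; lra.
rewrite ler_pdivrMr; last lra.
rewrite divfK; last lra.
have : 0 <= x ^+ M.+1 by rewrite exprn_ge0.
lra.
Qed.

Lemma prodA (R : realType) (t : R) (ps : seq nat) (n : nat) : uniq ps -> (0 < n)%N ->
  (forall p, prime p -> (p %| n)%N -> p \in ps) ->
  \prod_(p <- ps) (if logn p n == 0%N then 1 else t / (p%:R ^+ logn p n)) = t ^+ omega n / n%:R.
Proof.
move=> hu hn hP.
rewrite (bigID (mem (primes n))) /=.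
rewrite [X in _ * X]big1 ?mulr1; last first.
  move=> p hp; have : ~~ (0 < logn p n)%N by rewrite logn_gt0.
  by rewrite lt0n negbK => ->.
rewrite -big_filter.
have hperm : perm_eq [seq x <- ps | x \in primes n] (primes n).
  apply: uniq_perm; first exact: filter_uniq.
    exact: primes_uniq.
  move=> p; rewrite mem_filter; apply/andP/idP => [[]//|hp]; split => //.
  move: hp; rewrite mem_primes => /and3P[hp1 _ hp2]; exact: hP.
rewrite (perm_big _ hperm) /=.
rewrite (eq_big_seq (fun p => t * ((p ^ logn p n)%N%:R)^-1)); last first.
  move=> p hp; rewrite -logn_gt0 in hp.
  move: hp; rewrite lt0n => /negbTE ->; by rewrite natrX.
rewrite big_split /= prodfV -natr_prod.
have -> : (\prod_(i <- primes n) i ^ logn i n)%N = n.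
  by rewrite [RHS](prod_prime_decomp hn) prime_decompE big_map.
congr (_ * _).
rewrite /omega; elim: (primes n) => [|a l IH]; first by rewrite big_nil expr0.
by rewrite big_cons IH /= exprS.
Qed.

Lemma main_sum (R : realType) (t : R) (ps ns : seq nat) : 1 <= t -> uniq ps -> all prime ps -> uniq ns ->
  (forall n, n \in ns -> (0 < n)%N /\ forall p, prime p -> (p %| n)%N -> p \in ps) ->
  \sum_(n <- ns) t ^+ omega n / n%:R <= \prod_(p <- ps) (1 + t / (p%:R - 1)).
Proof.
move=> ht hu hpr hun hns.
have ht0 : 0 <= t by lra.
pose m := size ps.
pose M := (\max_(n <- ns) n)%N.
pose G (i : 'I_m) (j : 'I_M.+1) : R :=
  if (j : nat) == 0%N then 1 else t / ((nth 0%N ps i)%:R ^+ j).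
pose phi (n : nat) : {ffun 'I_m -> 'I_M.+1} := [ffun i : 'I_m => inord (logn (nth 0%N ps i) n)].
have hlog : forall n (i : nat), n \in ns -> (logn (nth 0%N ps i) n < M.+1)%N.
  move=> n i hn.
  have hnM : (n <= M)%N by apply: (@leq_bigmax_seq _ _ xpredT (fun x => x)).
  case: (boolP (prime (nth 0%N ps i))) => hp; last by rewrite /logn (negbTE hp).
  have hn0 := (hns n hn).1.
  apply: (leq_trans _ (leq_trans hnM (leqnSn _))).
  apply: leq_trans (ltn_expl _ (prime_gt1 hp)) _.
  apply: dvdn_leq => //; exact: pfactor_dvdnn.
have hlog0 : forall n p, n \in ns -> p \notin ps -> logn p n = 0%N.
  move=> n p hn hp; apply/eqP; rewrite -leqn0 leqNgt logn_gt0 mem_primes.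
  apply/negP => /and3P[p1 _ p2]; by rewrite ((hns n hn).2 p p1 p2) in hp.
have A : forall n, n \in ns -> t ^+ omega n / n%:R = \prod_i G i (phi n i).
  move=> n hn; rewrite -(@prodA R t ps n hu (hns n hn).1 (hns n hn).2).
  rewrite (big_nth 0%N) big_mkord; apply: eq_bigr => i _.
  by rewrite /G ffunE inordK // hlog.
have B : {in ns &, injective phi}.
  move=> n1 n2 h1 h2 E; apply: eqn_from_log; [exact: (hns n1 h1).1|exact: (hns n2 h2).1|].
  move=> p; case: (boolP (p \in ps)) => hp; last by rewrite !hlog0.
  have hi : (index p ps < m)%N by rewrite index_mem.
  have := congr1 (fun f : {ffun 'I_m -> 'I_M.+1} => (f (Ordinal hi) : nat)) E.
  by rewrite /= !ffunE /= !inordK ?hlog // nth_index.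
have Gge0 : forall i j, 0 <= G i j.
  move=> i j; rewrite /G; case: ifP => _ //.
  by rewrite divr_ge0 // exprn_ge0.
rewrite (eq_big_seq (fun n => \prod_i G i (phi n i))); last by move=> n hn; exact: A.
rewrite -(big_map phi xpredT (fun f => \prod_i G i (f i))).
rewrite big_uniq; last by rewrite map_inj_in_uniq.
apply: (@le_trans _ _ (\sum_(f : {ffun 'I_m -> 'I_M.+1}) \prod_i G i (f i))).
  rewrite [X in _ <= X](bigID (mem (map phi ns))) /= lerDl.
  by apply: sumr_ge0 => f _; apply: prodr_ge0 => i _.
rewrite -bigA_distr_bigA /=.
rewrite (big_nth 0%N) big_mkord.
apply: ler_prod => i _; apply/andP; split; first by apply: sumr_ge0.
apply: geo_le => //.
apply: prime_gt1; apply: (allP hpr); exact: mem_nth.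
Qed.
Lemma tele (R : realType) (s : seq nat) m : (2 <= m)%N -> sorted ltn s -> all (leq m) s ->
  \sum_(x <- s) ((x%:R - 1)^-1 - (x%:R)^-1) <= ((m%:R : R) - 1)^-1.
Proof.
elim: s m => [|x s IH] m hm /= hs ha.
  by rewrite big_nil invr_ge0 subr_ge0 ler1n ltnW.
move/andP: ha => [hmx ha].
have hx2 : (2 <= x)%N by apply: leq_trans hmx.
rewrite big_cons.
have hs' : all (leq x.+1) s by apply: (order_path_min ltn_trans hs).
have := IH x.+1 (leq_trans hx2 (leqnSn _)) (path_sorted hs) hs'.
have -> : ((x.+1)%:R : R) - 1 = x%:R by rewrite -addn1 natrD addrK.
have hx : (2 : R) <= x%:R by rewrite ler_nat.
have hm' : (2 : R) <= m%:R by rewrite ler_nat.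
have hmx' : (m%:R : R) <= x%:R by rewrite ler_nat.
move=> h.
have : (x%:R - 1 : R)^-1 <= (m%:R - 1)^-1.
  rewrite lef_pV2 ?posrE; lra.
lra.
Qed.

Lemma sum_pm1 (R : realType) (ps : seq nat) : uniq ps -> all prime ps ->
  \sum_(p <- ps) ((p%:R : R) - 1)^-1 <= \sum_(p <- ps) (p%:R : R)^-1 + 1.
Proof.
move=> hu hp.
have -> : \sum_(p <- ps) ((p%:R : R) - 1)^-1 = \sum_(p <- ps) (p%:R : R)^-1 +
   \sum_(p <- ps) (((p%:R : R) - 1)^-1 - (p%:R)^-1).
  by rewrite -big_split /=; apply: eq_bigr => i _; rewrite addrC subrK.
rewrite lerD2l.
rewrite -(perm_big _ (permEl (perm_sort leq ps))).
have := @tele R (sort leq ps) 2 (leqnn _).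
rewrite ltn_sorted_uniq_leq sort_uniq hu sort_sorted /=; last exact: leq_total.
rewrite all_sort.
have -> : all (leq 2) ps by apply/allP => p hps; apply: prime_gt1; exact: (allP hp).
move=> /(_ isT isT).
have -> : ((2%:R : R) - 1)^-1 = 1 by rewrite -[2%N]/(1 + 1)%N natrD addrK invr1.
done.
Qed.

Theorem lemma5p2 (R : realType) (C eta : R) (heta : 1 <= eta) :
  exists K : R,
    forall (S : set nat) (beta z : R),
      (forall p, S p -> prime p) ->
      expR 1 < z ->
      (\esum_(p in S_le S z) ((p%:R)^-1)%R%:E <= (beta * ln (ln z) + C)%:E)%E ->
      (\esum_(n in [set n | N_le S z n /\ (eta * beta * ln (ln z) <= (omega n)%:R)%R])
          ((n%:R)^-1)%R%:E
        <= (K * powR (ln z) (beta * (eta - eta * ln eta)))%:E)%E.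
Proof.
exists (expR (eta * (C + 1))) => S beta z hS hz hsum.
have heta0 : 0 < eta by lra.
have hz0 : 0 < z by have := expR_gt0 (1 : R); lra.
have hlnz : 1 < ln z.
  have : ln (expR 1) < ln z by rewrite ltr_ln // posrE expR_gt0.
  by rewrite expRK.
set L := ln (ln z).
set k := eta * beta * L.
have hfin : finite_set (S_le S z).
  apply: (@sub_finite_set _ _ [set` iota 0 (Num.Def.archi_bound z)]); last exact: finite_seq.
  move=> p [_ hp]; change (p \in iota 0 (Num.Def.archi_bound z)); rewrite mem_iota add0n leq0n /=.
  rewrite -(ltr_nat R); apply: le_lt_trans hp _; apply: archi_boundP; lra.
set ps := finmap.enum_fset (fset_set (S_le S z)).
have hpsu : uniq ps by exact: finmap.fset_uniq.
have hmem : forall p, (p \in ps) = (p \in S_le S z).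
  by move=> p; rewrite /ps in_fset_set.
have hpspr : all prime ps.
  apply/allP => p; rewrite hmem inE => -[hp _]; exact: hS.
have hsum' : \sum_(p <- ps) (p%:R : R)^-1 <= beta * L + C.
  move: hsum; rewrite esum_fset //.
  rewrite fsbig_finite // sumEFin lee_fin.
  exact.
rewrite /esum; apply: ge_ereal_sup => _ [X [hXfin hXsub] <-].
rewrite fsbig_finite // sumEFin lee_fin.
set ns := finmap.enum_fset (fset_set X).
have hnsu : uniq ns by exact: finmap.fset_uniq.
have hnsX : forall n, n \in ns -> X n.
  by move=> n; rewrite /ns in_fset_set // inE.
have hns : forall n, n \in ns -> (0 < n)%N /\ forall p, prime p -> (p %| n)%N -> p \in ps.
  move=> n /hnsX /hXsub [[hn0 hP] _]; split => // p hp hpn.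
  by rewrite hmem inE; apply: hP.
have step1 : \sum_(n <- ns) (n%:R : R)^-1 <= expR (- k * ln eta) * \sum_(n <- ns) eta ^+ omega n / n%:R.
  rewrite mulr_sumr !big_seq; apply: ler_sum => n hn.
  have [_ hk] := hXsub n (hnsX n hn).
  have -> : eta ^+ omega n = expR ((omega n)%:R * ln eta) by rewrite expRM_natl lnK.
  rewrite mulrA -expRD mulrC ler_peMr ?invr_ge0 //.
  have hl : 0 <= ln eta by apply: ln_ge0.
  have : 0 <= (- k * ln eta + (omega n)%:R * ln eta).
    have -> : - k * ln eta + (omega n)%:R * ln eta = ((omega n)%:R - k) * ln eta by ring.
    by apply: mulr_ge0 => //; rewrite subr_ge0.
  move=> h; apply: le_trans (expR_ge1Dx _); lra.
apply: (le_trans step1).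
have step2 := @main_sum R eta ps ns heta hpsu hpspr hnsu hns.
have step3 : \prod_(p <- ps) (1 + eta / (p%:R - 1)) <= expR (eta * \sum_(p <- ps) ((p%:R : R) - 1)^-1).
  rewrite mulr_sumr expR_sum !big_seq; apply: ler_prod => p hp; apply/andP; split; last exact: expR_ge1Dx.
  have : (2 : R) <= p%:R by rewrite ler_nat; apply: prime_gt1; exact: (allP hpspr).
  move=> h2; apply: addr_ge0 => //; apply: divr_ge0; lra.
have step4 : expR (eta * \sum_(p <- ps) ((p%:R : R) - 1)^-1) <= expR (eta * (beta * L + C + 1)).
  rewrite ler_expR ler_pM2l //.
  have := @sum_pm1 R ps hpsu hpspr; lra.
apply: (@le_trans _ _ (expR (- k * ln eta) * expR (eta * (beta * L + C + 1)))).
  rewrite ler_pM2l ?expR_gt0 //; apply: (le_trans step2); exact: (le_trans step3).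
rewrite /powR ifF; last by apply/negbTE; rewrite gt_eqF //; lra.
rewrite -!expRD /L /k.
rewrite le_eqVlt; apply/orP; left; apply/eqP; congr expR; rewrite /L; ring.
Qed.
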